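(* Let $\mathbf P$ be a multi-cut polygon as in the context, with $Q(z)=\prod_{i=1}^{d+N}(z-x_i)$, and let $\mathcal S$ be the set of integer points $(n,y)\in\widetilde{\mathbf P}\setminus\mathbf P$ such that $(n,y-\frac12)$ lies on an upper oblique boundary segment of $\mathbf P$ or $(n,y+\frac12)$ lies on an upper vertical boundary segment of $\mathbf P$. Then for $(n,y)\in\mathcal S$, summing over the roots $z=y-N+n,\dots,y$ of $(z-y)_{N-n+1}$, $$\sum_{z=y-N+n}^{y}\frac{(N-n)!\,Q(z)}{(z-y)_{N-n+1}\,Q'(z)\,S^{(N)}_z(w)}=\frac1{S^{(n)}_y(w)},$$ where each summand means the value at $z$ of the rational function $\frac{(N-n)!\,Q(z)}{(z-y)_{N-n+1}Q'(z)}$ after cancellation of common factors, times $1/S^{(N)}_z(w)$.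
   Context: Coordinates $(m,x)\in\mathbb R^2$ ($m$ = height), lattice lines $m\in\mathbb Z$, $x\in\mathbb Z+\frac12$ (vertical), $x+m\in\mathbb Z+\frac12$ (oblique). Multi-cut polygon: fix integers $N\ge1$, $d\ge0$; $\widetilde{\mathbf P}=\{(m,x):0\le m\le N,\ -d-\frac12-m\le x\le x_1+\frac12\}$. $\mathbf P$ is obtained from $\widetilde{\mathbf P}$ by removing: a triangle at the upper-left corner with $b_0$ rows (bounded by the left side of $\widetilde{\mathbf P}$, $m=N$ and a vertical line); a triangle at the upper-right corner with $b_u$ rows (bounded by the right side, $m=N$ and an oblique line); $\ell$ disjoint triangular lower cuts with bases on $m=0$ (vertical left side, oblique right side), of total size $d$; $u-1$ disjoint triangular upper cuts of sizes $b_1,\dots,b_{u-1}$ with bases on $m=N$ (oblique left side, vertical right side); $\sum_0^ub_i=d+N$; all vertices on lines $x\in\mathbb Z+\frac12$. Upper oblique boundary segments: the right oblique side of $\mathbf P$ and the oblique sides of upper cuts; upper vertical boundary segments: the left vertical side of $\mathbf P$ and the vertical sides of upper cuts. $x_1>\dots>x_{d+N}$ are the integer points of $(\widetilde{\mathbf P}\setminus\mathbf P)\cap\{m=N\}$. Notation: $(a)_k=a(a+1)\cdots(a+k-1)$, $(a)_0=1$; $S^{(k)}_x(w)=w^{x+1}(1-w)^k$. *)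

(* Defs.v *)
From HB Require Import structures.
From mathcomp Require Import all_boot all_order all_algebra.
Set Implicit Arguments. Unset Strict Implicit. Unset Printing Implicit Defensive.
Import Order.TTheory GRing.Theory Num.Theory.
Local Open Scope ring_scope.

(* Coordinates (m, x): m = height, x = horizontal.  Geometry is done over rat.
   A half-integer is written  l + 1/2  with l : int. *)
Definition half : rat := 2%:R^-1.
Definition hf (l : int) : rat := l%:~R + half.

(* Data of a multi-cut polygon:
   - N, d;
   - r : the right side of Ptilde is the vertical line x = r + 1/2 (r = x_1);
   - b0 (rows of the upper-left corner triangle), bu (upper-right one);
   - up  : upper cuts (l, b): base on m = N from x = l+1/2 to x = l+1/2+b,
           oblique left side, vertical right side;
   - low : lower cuts (l, a): base on m = 0 from x = l+1/2 to x = l+1/2+a,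
           vertical left side, oblique right side. *)
Record mcpoly := MCPoly {
  mc_N : nat; mc_d : nat; mc_r : int; mc_b0 : nat; mc_bu : nat;
  mc_up : seq (int * nat); mc_low : seq (int * nat) }.

Section Geometry.
Variable P : mcpoly.
Let N : rat := (mc_N P)%:R.
Let d : rat := (mc_d P)%:R.

Definition Ptilde (m x : rat) : bool :=
  (0 <= m <= N) && (- d - half - m <= x <= hf (mc_r P)).

(* closed upper-left triangle: left side of Ptilde, m = N, vertical line *)
Definition triUL (m x : rat) : bool :=
  [&& m <= N, - d - half - m <= x & x <= - d - N - half + (mc_b0 P)%:R].

(* closed upper-right triangle: right side of Ptilde, m = N, oblique line *)
Definition triUR (m x : rat) : bool :=
  [&& m <= N, x <= hf (mc_r P) & hf (mc_r P) + N - (mc_bu P)%:R <= x + m].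

Definition triUp (c : int * nat) (m x : rat) : bool :=
  [&& m <= N, hf c.1 + N <= x + m & x <= hf c.1 + c.2%:R].

Definition triLow (c : int * nat) (m x : rat) : bool :=
  [&& 0 <= m, hf c.1 <= x & x + m <= hf c.1 + c.2%:R].

Definition pieces : seq (rat -> rat -> bool) :=
  [:: triUL; triUR] ++ map triUp (mc_up P) ++ map triLow (mc_low P).

Definition removed (m x : rat) : bool :=
  has (fun T : rat -> rat -> bool => T m x) pieces.

Definition inPtminusP (m x : rat) : bool := Ptilde m x && removed m x.

(* The integer points of (Ptilde \ P) on the line m = N: x_1 > ... > x_{d+N}
   (listed here in increasing order). *)
Definition topRemoved : seq int :=
  [seq x <- [seq (k%:Z - (mc_d P + mc_N P)%:Z)%R
              | k <- iota 0 (absz (mc_r P + (mc_d P + mc_N P)%:Z + 1)%R)]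
   | inPtminusP N x%:~R].

(* upper oblique boundary segments: right oblique side of P and the oblique
   sides of the upper cuts *)
Definition on_up_oblique (m x : rat) : bool :=
  ((x + m == hf (mc_r P) + N - (mc_bu P)%:R) && (N - (mc_bu P)%:R <= m <= N))
  || has (fun c : int * nat =>
            (x + m == hf c.1 + N) && (N - c.2%:R <= m <= N)) (mc_up P).

(* upper vertical boundary segments: left vertical side of P and the vertical
   sides of the upper cuts *)
Definition on_up_vertical (m x : rat) : bool :=
  ((x == - d - N - half + (mc_b0 P)%:R) && (N - (mc_b0 P)%:R <= m <= N))
  || has (fun c : int * nat =>
            (x == hf c.1 + c.2%:R) && (N - c.2%:R <= m <= N)) (mc_up P).

Definition inS (n : nat) (y : int) : bool :=
  inPtminusP n%:R y%:~R &&
  (on_up_oblique n%:R (y%:~R - half) || on_up_vertical n%:R (y%:~R + half)).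

End Geometry.

Definition mc_wf (P : mcpoly) : Prop :=
  [/\ (1 <= mc_N P)%N,
      all (fun c : int * nat => 0 < c.2)%N (mc_up P) /\
      all (fun c : int * nat => 0 < c.2)%N (mc_low P),
      (mc_b0 P + mc_bu P + \sum_(c <- mc_up P) c.2 = mc_d P + mc_N P)%N,
      (\sum_(c <- mc_low P) c.2 = mc_d P)%N &
      [/\
          (forall i j : nat, (i < j < size (pieces P))%N ->
             forall m x : rat,
               ~~ (nth (fun _ _ => false) (pieces P) i m x &&
                   nth (fun _ _ => false) (pieces P) j m x)),
          (forall i : nat, (i < size (pieces P))%N -> forall m x : rat,
             nth (fun _ _ => false) (pieces P) i m x -> Ptilde P m x),
          (* x_1 (= mc_r P) is the largest element of (Ptilde\P) ∩ {m = N} *)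
          mc_r P \in topRemoved P &
          size (topRemoved P) = (mc_d P + mc_N P)%N]].

Definition Qpoly (R : numFieldType) (P : mcpoly) : {poly R} :=
  \prod_(x <- topRemoved P) ('X - (x%:~R)%:P).

Definition poch (R : numFieldType) (a : {poly R}) (k : nat) : {poly R} :=
  \prod_(i < k) (a + (i%:R)%:P).

Definition Sfun (R : numFieldType) (k : nat) (x : int) (w : R) : R :=
  w ^ (x + 1) * (1 - w) ^+ k.

Definition cancel_eval (R : numFieldType) (p q : {poly R}) (z : R) : R :=
  (p %/ gcdp p q).[z] / (q %/ gcdp p q).[z].

Definition cancel_den (R : numFieldType) (p q : {poly R}) : {poly R} :=
  q %/ gcdp p q.

(* Main.v *)
Set Warnings "-notation-overridden,-ambiguous-paths,-parsing,-coercions".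
Require Import Defs.
From HB Require Import structures.
From mathcomp Require Import all_boot all_order all_algebra.
From mathcomp Require Import ring lra zify.
Import Order.TTheory GRing.Theory Num.Theory.
Local Open Scope ring_scope.
Lemma cancel_lemma (R : numFieldType) (p q u v : {poly R}) (z : R) :
  p != 0 -> p * v = q * u -> v.[z] != 0 ->
  (cancel_den p q).[z] != 0 /\ cancel_eval p q z = u.[z] / v.[z].
Proof.
move=> p0 e vz; rewrite /cancel_den /cancel_eval.
set g := gcdp p q.
have g0 : g != 0 by rewrite gcdp_eq0 negb_and p0.
have hp : p = (p %/ g) * g by rewrite divpK // dvdp_gcdl.
have hq : q = (q %/ g) * g by rewrite divpK // dvdp_gcdr.
have e' : (p %/ g) * v = (q %/ g) * u.
  apply: (mulIf g0); rewrite mulrAC -hp e [in RHS]mulrAC -hq //.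
have cop : coprimep (q %/ g) (p %/ g).
  by rewrite coprimep_sym coprimep_div_gcd // p0.
have dv : (q %/ g) %| v by rewrite -(Gauss_dvdpr v cop) e' dvdp_mulr.
have qz : (q %/ g).[z] != 0.
  move: dv => /dvdpP [t ht]; apply: contraNneq vz => h.
  by rewrite ht hornerM h mulr0.
split => //.
have := congr1 (horner^~ z) e'; rewrite !hornerM => h.
by apply/eqP; rewrite eqr_div // h mulrC.
Qed.
Lemma topRemoved_uniq P : uniq (topRemoved P).
Proof.
rewrite /topRemoved filter_uniq // map_inj_uniq ?iota_uniq // => a b /eqP.
by rewrite subr_eq addrNK => /eqP [].
Qed.

Lemma Q_factor (R : numFieldType) {P} {z0 : int} : z0 \in topRemoved P ->
  exists2 Rj : {poly R}, Qpoly R P = ('X - (z0%:~R)%:P) * Rj & Rj.[z0%:~R] != 0.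
Proof.
move=> hz; exists (\prod_(x <- rem z0 (topRemoved P)) ('X - (x%:~R)%:P)).
  by rewrite /Qpoly (perm_big _ (perm_to_rem hz)) big_cons.
rewrite horner_prod prodf_seq_neq0; apply/allP => x.
rewrite mem_rem_uniq ?topRemoved_uniq // => /andP [hx _] /=.
by rewrite hornerXsubC subr_eq0 eqr_int eq_sym.
Qed.
Lemma prod_neg (R : numFieldType) (j : nat) :
  \prod_(0 <= i < j) ((i%:R : R) - j%:R) = (-1) ^+ j * (j`!)%:R.
Proof.
rewrite big_nat_rev /= add0n.
rewrite (eq_big_nat _ _ (F2 := fun i => - (i.+1)%:R)); last first.
  by move=> i /andP [_ hi]; rewrite natrB; [ring|lia].
rewrite big_mkord prodrN card_ord fact_prod big_add1 /= -natr_prod big_mkord.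
done.
Qed.

Lemma prod_pos (R : numFieldType) (j k : nat) : (j <= k)%N ->
  \prod_(j.+1 <= i < k.+1) ((i%:R : R) - j%:R) = ((k - j)`!)%:R.
Proof.
move=> jk.
rewrite (eq_big_nat _ _ (F2 := fun i => (i - j)%N%:R)); last first.
  by move=> i /andP [hi _]; rewrite natrB //; lia.
rewrite -natr_prod -[j.+1]add1n big_addn fact_prod; congr (_ %:R).
rewrite subSn //; apply: eq_bigr => i _; lia.
Qed.

Lemma poch_factor (R : numFieldType) (y : int) (k j : nat) : (j <= k)%N ->
 exists2 M : {poly R}, poch ('X - (y%:~R)%:P) k.+1 = ('X - ((y - j%:Z)%:~R)%:P) * M
   & M.[(y - j%:Z)%:~R] = (-1)^+j * (j`! * (k-j)`!)%:R.
Proof.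
move=> jk.
pose f := fun i : nat => 'X - (y%:~R)%:P + ((i%:R : R))%:P.
exists ((\prod_(0 <= i < j) f i) * \prod_(j.+1 <= i < k.+1) f i).
  rewrite /poch -(big_mkord (fun _ => true) f) (@big_cat_nat _ _ _ j 0 k.+1) //; last (apply: leq_trans jk _; done).
  rewrite [\big[_/_]_(j <= i < k.+1) _]big_ltn; last lia.
  rewrite mulrCA; congr (_ * _).
  by rewrite /f intrB polyCB /= opprB addrA addrAC.
rewrite hornerM !horner_prod.
rewrite (eq_big_nat _ _ (F2 := fun i => (i%:R : R) - j%:R)); last first.
  by move=> i _; rewrite /f !hornerE intrB; ring.
rewrite [X in _ * X = _](eq_big_nat _ _ (F2 := fun i => (i%:R : R) - j%:R)); last first.
  by move=> i _; rewrite /f !hornerE intrB; ring.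
by rewrite prod_neg prod_pos // natrM mulrA.
Qed.
Lemma sum_binom (R: numFieldType) (N n : nat) (y : int) (w : R) :
  (n <= N)%N -> w != 0 -> w != 1 ->
  \sum_(j < (N-n).+1) ((-1)^+j * ('C(N-n, j))%:R) / Sfun N (y - j%:Z) w
  = 1 / Sfun n y w.
Proof.
move=> nN w0 w1; rewrite /Sfun.
have w1' : 1 - w != 0 by rewrite subr_eq0 eq_sym.
have wy : w ^ (y + 1) != 0 by rewrite expfz_neq0.
have -> : (N = (N - n) + n)%N by rewrite subnK.
rewrite addnK.
set k := (N - n)%N.
set c := ((1 - w) ^+ k)^-1 * ((w ^ (y + 1))^-1 * (1 - w) ^- n).
have E : forall j : 'I_k.+1, ((-1)^+j * ('C(k, j))%:R) / (w ^ (y - j%:Z + 1) * (1 - w) ^+ (k + n))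
   = ((-1)^+j * ('C(k, j))%:R * w ^+ j) * c.
  move=> j; rewrite /c addrAC expfzDr // -exprnN exprD.
  field. by rewrite !expf_neq0 // wy.
rewrite (eq_bigr _ (fun j _ => E j)) -mulr_suml.
have -> : \sum_(i < k.+1) (-1) ^+ i * ('C(k, i))%:R * w ^+ i = (1 - w) ^+ k.
  rewrite (exprDn 1 (-w)); apply: eq_bigr => i _.
  by rewrite expr1n mul1r [in RHS]exprNn -mulr_natr; ring.
rewrite /c; move: wy; set a := w ^ (y + 1) => wy.
field; by rewrite !expf_neq0 // wy.
Qed.

Lemma term_val (R : numFieldType) P (k j : nat) (y : int) : (j <= k)%N ->
  (y - j%:Z) \in topRemoved P ->
  let num : {poly R} := (k`!)%:R *: Qpoly R P in
  let den : {poly R} := poch ('X - (y%:~R)%:P) k.+1 * (Qpoly R P)^`() in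
  (cancel_den num den).[(y - j%:Z)%:~R] != 0 /\
  cancel_eval num den (y - j%:Z)%:~R = (-1)^+j * ('C(k,j))%:R.
Proof.
move=> jk hz num den.
have [Rj hQ Rz] := Q_factor R hz.
have [M hM Mz] := @poch_factor R y k j jk.
set z := ((y - j%:Z)%:~R : R) in hQ Rz hM Mz *.
have kf : (k`!)%:R != 0 :> R by rewrite pnatr_eq0 -lt0n fact_gt0.
have jf : ((j`! * (k - j)`!)%N)%:R != 0 :> R by rewrite pnatr_eq0 -lt0n muln_gt0 !fact_gt0.
have Q'z : ((Qpoly R P)^`()).[z] = Rj.[z].
  by rewrite hQ derivM derivXsubC !hornerE subrr; ring.
have Mz0 : M.[z] != 0 by rewrite Mz mulf_neq0 // expf_neq0 // oppr_eq0 oner_eq0.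
have := @cancel_lemma R num den ((k`!)%:R *: Rj) (M * (Qpoly R P)^`()) z.
case.
- rewrite /num scaler_eq0 negb_or kf /=.
  by apply: monic_neq0; rewrite /Qpoly monic_prod_XsubC.
- rewrite /num /den hM {1}hQ -!mul_polyC; ring.
- by rewrite hornerM Q'z mulf_neq0.
move=> -> ->; split => //.
rewrite hornerZ hornerM Q'z Mz.
have nat_eq := bin_fact jk.
rewrite -nat_eq natrM.
have hs : (-1) ^+ j = ((-1) ^+ j)^-1 :> R by rewrite -exprVn invrN1.
rewrite [in RHS]hs.
have s0 : (-1) ^+ j != 0 :> R by rewrite expf_neq0 // oppr_eq0 oner_eq0.
move: jf Rz s0; set a := (_ * _)%:R; set b := Rj.[z]; set s := (-1) ^+ j => jf Rz s0.
field.
by rewrite s0 Rz !pnatr_eq0 -!lt0n !fact_gt0.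
Qed.
Lemma gapA (z : int) : - (2%:R^-1 : rat) <= (z%:~R : rat) -> (0 : rat) <= z%:~R.
Proof.
rewrite ler0z /Defs.half => h; rewrite leNgt; apply/negP => hz.
have : (z%:~R : rat) <= -1 by rewrite -[-1 : rat]/((-1)%:~R) ler_int; lia.
lra.
Qed.
Lemma gapB (z : int) : (z%:~R : rat) <= 2%:R^-1 -> (z%:~R : rat) <= 0.
Proof.
rewrite /Defs.half => h; rewrite -[0 : rat]/(0%:~R) ler_int leNgt; apply/negP => hz.
have : (1 : rat) <= z%:~R by rewrite -[1 : rat]/(1%:~R) ler_int; lia.
lra.
Qed.

Definition f0 : rat -> rat -> bool := fun _ _ => false.

Lemma pieces_cases {P i} : (i < size (pieces P))%N ->
  let T := nth f0 (pieces P) i in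
  [\/ T = triUL P, T = triUR P, (exists c : int * nat, T = triUp P c) | (exists c : int * nat, T = triLow c)].
Proof.
rewrite /pieces /=; case: i => [|[|i]] //= hi; [by constructor 1 | by constructor 2 |].
rewrite nth_cat size_map; case: ifP => h.
- by constructor 3; exists (nth (0, 0%N) (mc_up P) i); rewrite (nth_map (0,0%N)).
- constructor 4; exists (nth (0,0%N) (mc_low P) (i - size (mc_up P))).
  rewrite (nth_map (0,0%N)) //.
  rewrite size_cat !size_map !ltnS in hi; move/negbT: h; rewrite -leqNgt => h.
  by rewrite ltn_subLR.
Qed.

Lemma shift {P i} {n : nat} {y : int} : (i < size (pieces P))%N ->
  nth f0 (pieces P) i n%:R y%:~R ->
  nth f0 (pieces P) i n%:R (y%:~R - Defs.half) && nth f0 (pieces P) i n%:R (y%:~R + Defs.half).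
Proof.
move=> hi; case: (pieces_cases (P:=P) hi) => [->|->|[c ->]|[c ->]];
  rewrite /triUL /triUR /triUp /triLow /hf /Defs.half => /and3P [h1 h2 h3].
- have := gapA (y + n%:Z + (mc_d P)%:Z) ltac:(lra).
  have := gapB (y + (mc_d P)%:Z + (mc_N P)%:Z - (mc_b0 P)%:Z + 1) ltac:(lra).
  by move=> *; apply/andP; split; apply/and3P; split; lra.
- have := gapB (y - mc_r P) ltac:(lra).
  have := gapA (y + n%:Z - mc_r P - (mc_N P)%:Z + (mc_bu P)%:Z - 1) ltac:(lra).
  by move=> *; apply/andP; split; apply/and3P; split; lra.
- have := gapA (y + n%:Z - c.1 - (mc_N P)%:Z - 1) ltac:(lra).
  have := gapB (y - c.1 - c.2%:Z) ltac:(lra).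
  by move=> *; apply/andP; split; apply/and3P; split; lra.
- have := gapA (y - c.1 - 1) ltac:(lra).
  have := gapB (y + n%:Z - c.1 - c.2%:Z) ltac:(lra).
  by move=> *; apply/andP; split; apply/and3P; split; lra.
Qed.

Lemma upward P T (m : nat) (yy : int) (jj : nat) :
  [\/ T = triUL P, T = triUR P | exists c : int * nat, T = triUp P c] ->
  T m%:R yy%:~R -> (jj <= mc_N P - m)%N -> T (mc_N P)%:R (yy - jj%:Z)%:~R.
Proof.
move=> hT hm hj.
have mN : (m <= mc_N P)%N.
  by case: hT hm => [->|->|[c ->]] /and3P [h1 _ _]; rewrite ler_nat in h1.
have hj' : (jj%:R + m%:R <= (mc_N P)%:R :> rat).
  by rewrite -natrD ler_nat; lia.
case: hT hm => [->|->|[c ->]]; rewrite /triUL /triUR /triUp /hf /Defs.half => /and3P [h1 h2 h3];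
  have j0 : (0 : rat) <= jj%:R := ler0n _ _;
  apply/and3P; split; lra.
Qed.

Lemma same_piece P i j (n : nat) (y : int) (e : rat) : mc_wf P ->
  (i < size (pieces P))%N -> (j < size (pieces P))%N ->
  nth f0 (pieces P) i n%:R y%:~R -> nth f0 (pieces P) j n%:R (y%:~R + e) ->
  (e = Defs.half \/ e = - Defs.half) -> i = j.
Proof.
case=> _ _ _ _ [disj _ _ _] hi hj hTi hTj he.
have /andP [hm hp] := shift hi hTi.
have hTi' : nth f0 (pieces P) i n%:R (y%:~R + e) by case: he => ->.
case: (ltngtP i j) => // hij.
- by have := disj i j ltac:(by rewrite hij hj) n%:R (y%:~R + e); rewrite hTi' hTj.
- by have := disj j i ltac:(by rewrite hij hi) n%:R (y%:~R + e); rewrite hTi' hTj.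
Qed.

Lemma core P (n : nat) (y : int) : mc_wf P -> inS P n y ->
  exists2 i, (i < size (pieces P))%N &
    nth f0 (pieces P) i n%:R y%:~R /\
    [\/ nth f0 (pieces P) i = triUL P, nth f0 (pieces P) i = triUR P
      | exists c : int * nat, nth f0 (pieces P) i = triUp P c].
Proof.
move=> wf /andP [/andP [hPt hrem] hb].
move/(has_nthP f0): hrem => [i hi hTi].
have [j hj [e [hTj he hup]]] : exists2 j, (j < size (pieces P))%N &
    exists e, [/\ nth f0 (pieces P) j n%:R (y%:~R + e), e = Defs.half \/ e = - Defs.half &
    [\/ nth f0 (pieces P) j = triUL P, nth f0 (pieces P) j = triUR P
      | exists c : int * nat, nth f0 (pieces P) j = triUp P c]].
  case/orP: hb => [hob|hve].
  - case/orP: hob => [/andP [/eqP he /andP [hb1 hb2]] | /hasP [c cin /andP [/eqP he /andP [hb1 hb2]]]].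
    + exists 1%N; first by rewrite /pieces.
      exists (- Defs.half); split; [|by right|by constructor 2].
      rewrite /= /triUR; move: he hb1 hb2; rewrite /hf /Defs.half => *; apply/and3P; split; lra.
    + have hc : nth f0 (pieces P) (index c (mc_up P)).+2 = triUp P c.
        by rewrite /pieces /= nth_cat size_map index_mem cin (nth_map c) ?index_mem // nth_index.
      exists (index c (mc_up P)).+2.
        by rewrite /pieces /= size_cat size_map !ltnS ltn_addr // index_mem.
      exists (- Defs.half); split; [|by right|by constructor 3; exists c].
      rewrite hc /triUp; move: he hb1 hb2; rewrite /hf /Defs.half => *; apply/and3P; split; lra.
  - case/orP: hve => [/andP [/eqP he /andP [hb1 hb2]] | /hasP [c cin /andP [/eqP he /andP [hb1 hb2]]]].
    + exists 0%N; first by rewrite /pieces.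
      exists Defs.half; split; [|by left|by constructor 1].
      rewrite /= /triUL; move: he hb1 hb2; rewrite /hf /Defs.half => *; apply/and3P; split; lra.
    + have hc : nth f0 (pieces P) (index c (mc_up P)).+2 = triUp P c.
        by rewrite /pieces /= nth_cat size_map index_mem cin (nth_map c) ?index_mem // nth_index.
      exists (index c (mc_up P)).+2.
        by rewrite /pieces /= size_cat size_map !ltnS ltn_addr // index_mem.
      exists Defs.half; split; [|by left|by constructor 3; exists c].
      rewrite hc /triUp; move: he hb1 hb2; rewrite /hf /Defs.half => *; apply/and3P; split; lra.
have eij := @same_piece P i j n y e wf hi hj hTi hTj he.
by exists i => //; rewrite eij in hTi *.
Qed.

Lemma geom P (n : nat) (y : int) : mc_wf P -> inS P n y ->
  (n <= mc_N P)%N /\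
  forall jj : nat, (jj <= mc_N P - n)%N -> (y - jj%:Z) \in topRemoved P.
Proof.
move=> wf hS.
have [i hi [hTi hup]] := @core P n y wf hS.
have nN : (n <= mc_N P)%N.
  move: hS => /andP [/andP [/andP [/andP [_ h] _] _] _].
  by rewrite ler_nat in h.
split => // jj hjj.
have hT : nth f0 (pieces P) i (mc_N P)%:R (y - jj%:Z)%:~R.
  by apply: upward hup hTi hjj.
have [_ _ _ _ [_ cont _ _]] := wf.
have hPt := cont i hi _ _ hT.
have hrem : removed P (mc_N P)%:R (y - jj%:Z)%:~R.
  by apply/(has_nthP f0); exists i.
rewrite /topRemoved mem_filter /inPtminusP hPt hrem /=.
move: hPt => /andP [_ /andP [h1 h2]].
move: h1 h2; rewrite /hf /Defs.half => h1 h2.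
set L := y - jj%:Z + (mc_d P + mc_N P)%:Z.
have L0 : 0 <= L.
  rewrite -(ler0z rat); apply: gapA; rewrite /L; lra.
have Lr : y - jj%:Z <= mc_r P.
  rewrite -subr_ge0 -(ler0z rat); apply: gapA; lra.
apply/mapP; exists (absz L).
  rewrite mem_iota /=; rewrite /L in L0 *; lia.
rewrite /L in L0 *; lia.
Qed.

Theorem lemma3p3 (R : numFieldType) (P : mcpoly) (n : nat) (y : int) (w : R) :
  mc_wf P -> inS P n y -> w != 0 -> w != 1 ->
  let k := (mc_N P - n)%N in
  let num : {poly R} := (k`!)%:R *: Qpoly R P in
  let den : {poly R} := poch ('X - (y%:~R)%:P) k.+1 * (Qpoly R P)^`() in
  (forall j : 'I_k.+1, (cancel_den num den).[(y - j%:Z)%:~R] != 0) /\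
  \sum_(j < k.+1)
     cancel_eval num den (y - j%:Z)%:~R / Sfun (mc_N P) (y - j%:Z) w
  = 1 / Sfun n y w.
Proof.
move=> wf hS w0 w1 k num den.
have [nN hmem] := @geom P n y wf hS.
split.
  move=> j; have jk : (j <= k)%N by rewrite -ltnS.
  by have [h1 _] := @term_val R P k j y jk (hmem j jk).
rewrite (eq_bigr (fun j : 'I_k.+1 => ((-1)^+j * ('C(k,j))%:R) / Sfun (mc_N P) (y - j%:Z) w)).
  exact: sum_binom.
move=> j _; have jk : (j <= k)%N by rewrite -ltnS.
by have [_ ->] := @term_val R P k j y jk (hmem j jk).
Qed.
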